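(* Let $n\ge2$, and let $\rho_1,\ldots,\rho_n>0$ and $\theta>0$ be (sufficiently smooth) functions on a domain in $\mathbb{R}^3$, with $\rho=\sum_{i=1}^n\rho_i$ and $\mu_i=\theta(\log(\rho_i/\theta)+1)$. Let $b_{ij}=b_{ji}>0$ ($i\ne j$) be friction coefficients, and let $B=(B_{ij})$ be given by $B_{ii}=\sum_{j\ne i}b_{ij}\rho_j$ and $B_{ij}=-b_{ij}\rho_i$ for $j\ne i$; let $B^\#$ be the group inverse of $B$, i.e. the matrix satisfying $BB^\#=B^\#B=I-(\boldsymbol\rho/\rho)\otimes\boldsymbol1$, $\sum_jB^\#_{ij}\rho_j=0$ and $\sum_jB^\#_{ji}=0$ for all $i$. Let $P=(P_{ij})$ with $P_{ij}=\delta_{ij}-\rho_j/\rho$. Let $\bar q_1,\ldots,\bar q_n\in\mathbb{R}$ satisfy $\sum_{i=1}^n\bar q_i\rho_i=0$, and define the driving forces $$d_i=\rho_i\nabla\frac{\mu_i}{\theta}-\frac{\rho_i}{\rho\theta}\nabla(\rho\theta)-2\rho_i\theta\nabla\frac1\theta+\bar q_i\rho_i\nabla\log\theta,\quad i=1,\ldots,n.$$ Suppose that the fluxes $J_1,\ldots,J_n$ satisfy $\sum_{i=1}^nJ_i=0$ and the Maxwell–Stefan relations $d_i=-\sum_{j=1}^nb_{ij}\rho_i\rho_j\big(\frac{J_i}{\rho_i}-\frac{J_j}{\rho_j}\big)$, $i=1,\ldots,n$. Then $$J_i=-\sum_{j=1}^nM_{ij}\nabla\frac{\mu_j}{\theta}-M_i\nabla\frac1\theta,\qquad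 M_{ij}=\sum_{k=1}^nB^\#_{ik}\rho_kP_{kj},\quad M_i=-\theta\sum_{k=1}^nB^\#_{ik}\rho_k\bar q_k,$$ where the matrix $(M_{ij})$ is symmetric and $\sum_{i=1}^nM_{ij}=0$ for all $j$ and $\sum_{i=1}^nM_i=0$.
   Context: For vectors $a,b\in\mathbb{R}^n$, $(a\otimes b)_{ij}=a_ib_j$; $\boldsymbol1=(1,\ldots,1)$, $\boldsymbol\rho=(\rho_1,\ldots,\rho_n)$. Note $\nabla(\mu_j/\theta)=\nabla q_j$ with $q_j=\log(\rho_j/\theta)$ the thermo-chemical potentials, so the conclusion is the Fick–Onsager form of the fluxes. (The paper denotes the real numbers $\bar q_i$ by $q_i$; they are renamed here to avoid a clash with the thermo-chemical potentials.) *)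

(* Defs.v *)
From HB Require Import structures.
From mathcomp Require Import all_boot all_order all_algebra.
From mathcomp Require Import all_classical all_reals all_analysis.
Set Implicit Arguments. Unset Strict Implicit. Unset Printing Implicit Defensive.
Import Order.TTheory GRing.Theory Num.Theory.
Import numFieldNormedType.Exports.
Local Open Scope ring_scope.

Section Defs.
Variable R : realType.
Notation V := 'rV[R]_3.

Definition grad (f : V -> R) (x : V) : V :=
  \row_(k < 3) derive f x (delta_mx 0 k).

Variable n : nat.

Definition rho_tot (rho : 'I_n -> V -> R) (x : V) : R := \sum_(i < n) rho i x.

Definition chem_pot (rho : 'I_n -> V -> R) (theta : V -> R) (i : 'I_n) (x : V) : R :=
  theta x * (ln (rho i x / theta x) + 1).

Definition fricB (b : 'I_n -> 'I_n -> R) (rho : 'I_n -> V -> R) (x : V) : 'M[R]_n :=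
  \matrix_(i, j) (if i == j then \sum_(k < n | k != i) b i k * rho k x
                  else - (b i j * rho i x)).

Definition projP (rho : 'I_n -> V -> R) (x : V) : 'M[R]_n :=
  \matrix_(i, j) ((i == j)%:R - rho j x / rho_tot rho x).

Definition rho_otimes_one (rho : 'I_n -> V -> R) (x : V) : 'M[R]_n :=
  \matrix_(i, j) (rho i x / rho_tot rho x).

Definition drive_force (rho : 'I_n -> V -> R) (theta : V -> R) (q : 'I_n -> R)
    (i : 'I_n) (x : V) : V :=
  rho i x *: grad (fun y => chem_pot rho theta i y / theta y) x
  - (rho i x / (rho_tot rho x * theta x)) *: grad (fun y => rho_tot rho y * theta y) x
  - (2 * rho i x * theta x) *: grad (fun y => 1 / theta y) x
  + (q i * rho i x) *: grad (fun y => ln (theta y)) x.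

Definition Mmat (Bs : V -> 'M[R]_n) (rho : 'I_n -> V -> R) (x : V) : 'M[R]_n :=
  \matrix_(i, j) \sum_(k < n) Bs x i k * rho k x * projP rho x k j.

Definition Mvec (Bs : V -> 'M[R]_n) (rho : 'I_n -> V -> R) (theta : V -> R)
    (q : 'I_n -> R) (i : 'I_n) (x : V) : R :=
  - (theta x * \sum_(k < n) Bs x i k * rho k x * q k).

End Defs.

(* Main.v *)
Require Import Defs.
From HB Require Import structures.
From mathcomp Require Import all_boot all_order all_algebra.
From mathcomp Require Import all_classical all_reals all_analysis.
From mathcomp Require Import ring lra.
Import Order.TTheory GRing.Theory Num.Theory.
Import numFieldNormedType.Exports.
Local Open Scope ring_scope.
Local Open Scope classical_set_scope.

Lemma grad_ln (R : realType) (theta : 'rV[R]_3 -> R) x :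
  0 < theta x -> differentiable theta x ->
  grad (fun y => ln (theta y)) x = - theta x *: grad (fun y => 1 / theta y) x.
Proof.
move=> t0 dt; apply/rowP => k; rewrite !mxE.
have dl : differentiable (@ln R) (theta x).
  apply/derivable1_diffP; apply: ex_derive; exact: is_derive1_ln.
have -> : (fun y => ln (theta y)) = ((@ln R) \o theta) by [].
rewrite deriveE; last exact: differentiable_comp.
rewrite diff_comp //=.
have -> : (fun y => 1 / theta y) = (fun y => (theta y)^-1).
  by apply/funext => y; rewrite div1r.
rewrite deriveV ?gt_eqF //; last exact: diff_derivable.
set w := 'd theta x _.
have -> : w = w *: (1:R) by rewrite /GRing.scale /= mulr1.
rewrite linearZ /= -deriveE //.
have [_ ->] := is_derive1_ln t0.
rewrite /w -deriveE //.
rewrite /GRing.scale /=. field. by rewrite gt_eqF.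
Qed.

Lemma flux_inv (R : fieldType) (V : lmodType R) n (B G : 'M[R]_n) (r : 'I_n -> R)
  (J d : 'I_n -> V) :
  G *m B = 1%:M - \matrix_(i, j) (r i / \sum_(k < n) r k) ->
  \sum_(i < n) J i = 0 ->
  (forall i, d i = - \sum_(j < n) B i j *: J j) ->
  forall i, J i = - \sum_(k < n) G i k *: d k.
Proof.
move=> GB sJ hd i.
under eq_bigr => k _ do rewrite hd scalerN scaler_sumr.
rewrite sumrN opprK exchange_big /=.
under eq_bigr => j _ do (under eq_bigr => k _ do rewrite scalerA; rewrite -scaler_suml).
have e : forall j, \sum_(k < n) G i k * B k j = (G *m B) i j.
  by move=> j; rewrite !mxE.
under eq_bigr => j _ do rewrite e GB !mxE scalerBl.
rewrite sumrB -scaler_sumr sJ scaler0 subr0.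
rewrite (bigD1 i) //= eqxx scale1r big1 ?addr0 //.
by move=> j /negbTE; rewrite eq_sym => ->; rewrite scale0r.
Qed.

Lemma final (R : fieldType) (V : lmodType R) n (G : 'M[R]_n) (r q : 'I_n -> R)
  (th s : R) (g : 'I_n -> V) (T h : V) (J : 'I_n -> V) i :
  (\sum_(k < n) G i k * r k = 0) ->
  J i = - \sum_(k < n) G i k *: (r k *: g k - (r k / s) *: T - (2 * r k * th) *: h
             + (q k * r k) *: (- th *: h)) ->
  J i = - \sum_(j < n) (G i j * r j) *: g j
        - (- (th * \sum_(k < n) G i k * r k * q k)) *: h.
Proof.
move=> Gr ->; rewrite -opprD; congr (- _).
under eq_bigr => k _ do rewrite !(scalerDr, scalerBr) !(scalerN, scalerA).
rewrite !big_split /= !sumrN -!scaler_suml.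
have -> : \sum_(k < n) G i k * (r k / s) = 0.
  rewrite (eq_bigr (fun k => G i k * r k * s^-1)) -?mulr_suml ?Gr ?mul0r // => k _; ring.
have -> : \sum_(k < n) G i k * (2 * r k * th) = 0.
  rewrite (eq_bigr (fun k => G i k * r k * (2 * th))) -?mulr_suml ?Gr ?mul0r // => k _; ring.
rewrite scale0r subr0; congr (_ + _).
  by rewrite scale0r subr0.
congr (_ *: _).
by rewrite -mulNr mulr_sumr; apply: eq_bigr => k _; ring.
Qed.

Lemma ginv_sym (R : fieldType) n (B G : 'M[R]_n) (r : 'I_n -> R) :
  (forall i, r i != 0) -> \sum_(k < n) r k != 0 ->
  (forall i j, B i j * r j = B j i * r i) ->
  G *m B = 1%:M - \matrix_(i, j) (r i / \sum_(k < n) r k) ->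
  B *m G = 1%:M - \matrix_(i, j) (r i / \sum_(k < n) r k) ->
  (forall i, \sum_(j < n) G i j * r j = 0) ->
  (forall i, \sum_(j < n) G j i = 0) ->
  forall i j, G i j * r j = G j i * r i.
Proof.
move=> r0 rt0 Bs GB BG Gr Gc.
set P := \matrix_(i, j) (r i / \sum_(k < n) r k) in GB BG.
pose D := diag_mx (\row_i r i).
pose Di := diag_mx (\row_i (r i)^-1).
have DDi : D *m Di = 1%:M.
  apply/matrixP => i j; rewrite mul_diag_mx !mxE.
  by case: eqP => [->|_]; rewrite ?mulr1n ?mulr0n ?mulr0 // divff.
have DiD : Di *m D = 1%:M.
  apply/matrixP => i j; rewrite mul_diag_mx !mxE.
  by case: eqP => [->|_]; rewrite ?mulr1n ?mulr0n ?mulr0 // mulVf.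
have BD : B *m D = D *m B^T.
  apply/matrixP => i j; rewrite mul_diag_mx mul_mx_diag !mxE Bs mulrC.
  done.
have DiB : Di *m B = B^T *m Di.
  by rewrite -[Di *m B]mulmx1 -DDi mulmxA -(mulmxA Di) BD !mulmxA DiD mul1mx.
pose Y := D *m G^T *m Di.
have YB : Y *m B = 1%:M - P.
  rewrite /Y -mulmxA DiB mulmxA -(mulmxA D) -trmx_mul BG.
  apply/matrixP => i j; rewrite mul_mx_diag mul_diag_mx !mxE.
  case: (eqVneq i j) => [->|nij]; rewrite ?eqxx ?mulr1n ?mulr0n.
    by rewrite mulrC mulrA mulVf // mul1r.
  by field; rewrite rt0 r0.
have YP : Y *m P = 0.
  apply/matrixP => i j; rewrite !mxE.
  rewrite (eq_bigr (fun k => r i * G k i / \sum_(l < n) r l)).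
    rewrite -mulr_suml -mulr_sumr [X in r i * X](_ : _ = 0) ?mulr0 ?mul0r //; exact: Gc.
  move=> k _; rewrite /Y mul_mx_diag mul_diag_mx !mxE.
  by field; rewrite rt0 r0.
have PG : P *m G = 0.
  apply/matrixP => i j; rewrite !mxE.
  rewrite (eq_bigr (fun k => (r i / \sum_(l < n) r l) * G k j)).
    rewrite -mulr_sumr [X in _ * X](_ : _ = 0) ?mulr0 //; exact: Gc.
  by move=> k _; rewrite !mxE.
have YG : Y = G.
  have -> : Y = Y *m (1%:M - P) by rewrite mulmxBr YP subr0 mulmx1.
  by rewrite -BG mulmxA YB mulmxBl mul1mx PG subr0.
clear -YG r0; move=> i j; have := congr1 (fun M : matrix R n n => M i j) YG.
rewrite /Y mul_mx_diag mul_diag_mx !mxE => <-.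
by field; rewrite r0.
Qed.

Lemma ms_B (R : fieldType) (V : lmodType R) n (b : 'I_n -> 'I_n -> R) (r : 'I_n -> R)
  (B : 'M[R]_n) (J : 'I_n -> V) i :
  (forall j, r j != 0) ->
  (forall i j, B i j = if i == j then \sum_(k < n | k != i) b i k * r k else - (b i j * r i)) ->
  \sum_(j < n) (b i j * r i * r j) *: ((r i)^-1 *: J i - (r j)^-1 *: J j) =
  \sum_(j < n) B i j *: J j.
Proof.
move=> r0 hB.
have e : forall j, (b i j * r i * r j) *: ((r i)^-1 *: J i - (r j)^-1 *: J j)
   = (b i j * r j) *: J i - (b i j * r i) *: J j.
  move=> j; rewrite scalerBr !scalerA; congr (_ *: _ - _ *: _).
    by field; rewrite r0.
  by field; rewrite r0.
under eq_bigr => j _ do rewrite e.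
rewrite sumrB -scaler_suml.
rewrite (bigD1 i) //= [in RHS](bigD1 i) //= [X in _ - X](bigD1 i) //= hB eqxx.
rewrite scalerDl.
have -> : \sum_(j < n | j != i) B i j *: J j = - \sum_(j < n | j != i) (b i j * r i) *: J j.
  rewrite -sumrN; apply: eq_bigr => j nj; rewrite hB eq_sym (negbTE nj) scaleNr //.
rewrite opprD; set u := (_ *: J i); set w := (_ *: J i).
by rewrite [u + w]addrC -addrA addNKr.
Qed.

Lemma sum_pos (R : realDomainType) n (r : 'I_n -> R) : (0 < n)%N -> (forall i, 0 < r i) -> 0 < \sum_(i < n) r i.
Proof.
move=> n0 rp; rewrite (bigD1 (Ordinal n0)) //=.
have := rp (Ordinal n0).
have : 0 <= \sum_(i < n | i != Ordinal n0) r i by apply: sumr_ge0 => i _; apply: ltW.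
lra.
Qed.

Lemma Mmat_eq (R : fieldType) n (G : 'M[R]_n) (r : 'I_n -> R) i j :
  \sum_(k < n) G i k * r k = 0 ->
  \sum_(k < n) G i k * r k * ((k == j)%:R - r j / \sum_(l < n) r l) = G i j * r j.
Proof.
move=> Gr.
under eq_bigr => k _ do rewrite mulrBr.
rewrite sumrB (bigD1 j) //= eqxx mulr1 big1 ?addr0; last first.
  by move=> k /negbTE ->; rewrite mulr0.
by rewrite -mulr_suml Gr mul0r subr0.
Qed.

Theorem proposition2p1 (R : realType) (n : nat) (Omega : set 'rV[R]_3)
    (rho : 'I_n -> 'rV[R]_3 -> R) (theta : 'rV[R]_3 -> R)
    (b : 'I_n -> 'I_n -> R) (Bs : 'rV[R]_3 -> 'M[R]_n) (q : 'I_n -> R)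
    (J : 'I_n -> 'rV[R]_3 -> 'rV[R]_3) :
  (2 <= n)%N ->
  open Omega ->
  (forall x, Omega x -> forall i, 0 < rho i x) ->
  (forall x, Omega x -> 0 < theta x) ->
  (forall x, Omega x -> forall i, differentiable (rho i) x) ->
  (forall x, Omega x -> differentiable theta x) ->
  (forall i j, i != j -> b i j = b j i) ->
  (forall i j, i != j -> 0 < b i j) ->
  (* Bs x is the group inverse of B at x *)
  (forall x, Omega x ->
     fricB b rho x *m Bs x = 1%:M - rho_otimes_one rho x /\
     Bs x *m fricB b rho x = 1%:M - rho_otimes_one rho x /\
     (forall i, \sum_(j < n) Bs x i j * rho j x = 0) /\
     (forall i, \sum_(j < n) Bs x j i = 0)) ->
  (forall x, Omega x -> \sum_(i < n) q i * rho i x = 0) ->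
  (forall x, Omega x -> \sum_(i < n) J i x = 0) ->
  (forall x, Omega x -> forall i,
     drive_force rho theta q i x =
     - \sum_(j < n) (b i j * rho i x * rho j x) *:
          ((rho i x)^-1 *: J i x - (rho j x)^-1 *: J j x)) ->
  forall x, Omega x ->
    (forall i, J i x =
       - \sum_(j < n) Mmat Bs rho x i j *:
            grad (fun y => chem_pot rho theta j y / theta y) x
       - Mvec Bs rho theta q i x *: grad (fun y => 1 / theta y) x) /\
    (forall i j, Mmat Bs rho x i j = Mmat Bs rho x j i) /\
    (forall j, \sum_(i < n) Mmat Bs rho x i j = 0) /\
    \sum_(i < n) Mvec Bs rho theta q i x = 0.
Proof.
move=> n2 _ rp tp drho dth bsym bpos hBs hq hJ hMS x Ox.
have [H1 [H2 [H3 H4]]] := hBs x Ox.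
have r0 : forall k, rho k x != 0 by move=> k; rewrite gt_eqF ?rp.
have rtp : 0 < rho_tot rho x.
  by apply: sum_pos => //; [apply: (leq_trans _ n2) | exact: rp].
have rt0 : rho_tot rho x != 0 by rewrite gt_eqF.
have ME : forall i j, Mmat Bs rho x i j = Bs x i j * rho j x.
  move=> i j; rewrite /Mmat mxE.
  under eq_bigr => k _ do rewrite /projP mxE.
  exact: Mmat_eq.
have Bsym : forall i j, fricB b rho x i j * rho j x = fricB b rho x j i * rho i x.
  move=> i j; rewrite /fricB !mxE.
  case: (eqVneq i j) => [->//|nij]; rewrite (bsym _ _ nij).
  ring.
have Gs := @ginv_sym _ n (fricB b rho x) (Bs x) (fun k => rho k x) r0 rt0 Bsym H2 H1 H3 H4.
split.
  move=> i.
  have hd : forall k, drive_force rho theta q k x = - \sum_(j < n) fricB b rho x k j *: J j x.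
    move=> k; rewrite hMS //; congr (- _).
    apply: ms_B => // i0 j0; rewrite /fricB mxE //.
  have F := @flux_inv _ _ n (fricB b rho x) (Bs x) (fun k => rho k x) (fun k => J k x)
     (fun k => drive_force rho theta q k x) H2 (hJ x Ox) hd i.
  rewrite /drive_force in F.
  rewrite (@grad_ln _ theta x (tp x Ox) (dth x Ox)) in F.
  have := @final _ _ n (Bs x) (fun k => rho k x) q (theta x) (rho_tot rho x * theta x)
    (fun j => grad (fun y => chem_pot rho theta j y / theta y) x)
    (grad (fun y => rho_tot rho y * theta y) x) (grad (fun y => 1 / theta y) x)
    (fun k => J k x) i (H3 i) F.
  move=> ->; congr (- _ - _).
  by apply: eq_bigr => j _; rewrite ME.
split; first by move=> i j; rewrite !ME Gs.
split.
  move=> j; under eq_bigr => i _ do rewrite ME.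
  by rewrite -mulr_suml H4 mul0r.
rewrite /Mvec sumrN.
under eq_bigr => i _ do rewrite mulr_sumr.
rewrite exchange_big /=.
rewrite big1 ?oppr0 // => k _.
rewrite (eq_bigr (fun i => Bs x i k * (theta x * rho k x * q k))); last first.
  by move=> i _; ring.
by rewrite -mulr_suml H4 mul0r.
Qed.
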